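(* With notation as in the context, let $\overline{\mathcal P}=\{T^l(W): W\in\mathcal V,\ 0\le l\le|W|-1\}$. Then: (1) for each $k\ge1$ the sets $W\in\mathcal V$ with $|W|=k$ form a partition of $Y_k^0$, and $\overline{\mathcal P}$ is a quasi-partition of $X$; (2) $\overline{\mathcal P}$ is finer than $\mathcal P\cup\{E\}$ and than $\{Y_k^l: Y_k^l\ne\emptyset\}$; (3) if $\overline Z\in\overline{\mathcal P}$ and $\overline Z\subseteq Y_k^0$, then $T^i(\overline Z)\in\overline{\mathcal P}$ for $1\le i\le k-1$; and $\overline{\mathcal P}$ is the coarsest quasi-partition of $X$ with properties (2) and (3). Moreover, $\chi_{\overline Z}\in\mathcal B$ for every $\overline Z\in\overline{\mathcal P}$.
   Context: Let $X$ be an infinite, totally disconnected, compact metrizable space, $T$ a homeomorphism of $X$, $\mu$ a full (positive on nonempty open sets), ergodic, $T$-invariant Borel probability measure, $K$ a field with involution, $C_K(X)$ the $*$-algebra of locally constant functions $X\to K$, $\mathcal A=C_K(X)\rtimes_T\mathbb Z$ the algebraic crossed product (finite sums $\sum f_it^i$, $tf=(f\circ T^{-1})t$, $(ft^i)^*=t^{-i}f^*$). Let $E$ be a nonempty clopen set, $\mathcal P$ a partition of $X\setminus E$ (finite family of nonempty pairwise disjoint clopen sets with union $X\setminus E$), and $\mathcal B$ the unital $*$-subalgebra of $\mathcal A$ generated by $\{\chi_Zt:Z\in\mathcal P\}$. $\mathcal V$ is the set of nonempty sets $W=E\cap T^{-1}(Z_1)\cap\cdots\cap T^{-k+1}(Z_{k-1})\cap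 T^{-k}(E)$ with $k\ge1$, $Z_1,\dots,Z_{k-1}\in\mathcal P$, and $|W|:=k$. With $r_E(x)=\min\{l>0:T^l(x)\in E\}$ the first return map on $E$, $Y_k^l=T^l(r_E^{-1}(k))$ for $0\le l\le k-1$. A quasi-partition of $X$ is a finite or countable family of nonempty pairwise disjoint clopen sets whose union has full $\mu$-measure; a quasi-partition (or partition) $\mathcal Q_2$ is finer than $\mathcal Q_1$ if each member of $\mathcal Q_2$ is contained in a member of $\mathcal Q_1$. *)

(* Defs.v *)
From HB Require Import structures.
From mathcomp Require Import all_boot all_order all_algebra.
From mathcomp Require Import all_classical all_reals all_analysis.
Set Implicit Arguments. Unset Strict Implicit. Unset Printing Implicit Defensive.
Import Order.TTheory GRing.Theory Num.Theory.
Local Open Scope classical_set_scope.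
Local Open Scope ring_scope.

Section Partitions.
Variable X : topologicalType.

Definition clopen_disjoint_family (F : set (set X)) :=
  (forall Z, F Z -> Z !=set0 /\ clopen Z) /\
  (forall Z Z', F Z -> F Z' -> Z <> Z' -> Z `&` Z' = set0).

Definition is_partition (F : set (set X)) (A : set X) :=
  finite_set F /\ clopen_disjoint_family F /\ \bigcup_(Z in F) Z = A.

Definition quasi_partition {R : realType} (mu : set X -> \bar R)
  (F : set (set X)) :=
  countable F /\ clopen_disjoint_family F /\
  mu (\bigcup_(Z in F) Z) = 1%E.

Definition finer (F2 F1 : set (set X)) :=
  forall Z, F2 Z -> exists2 Z', F1 Z' & Z `<=` Z'.
End Partitions.

Section Towers.
Variables (X : Type) (T : X -> X) (E : set X) (P : set (set X)).

(* W is a member of V with |W| = k, i.e.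
   W = E ∩ T^{-1}(Z_1) ∩ ... ∩ T^{-k+1}(Z_{k-1}) ∩ T^{-k}(E), nonempty *)
Definition inV (k : nat) (W : set X) :=
  (1 <= k)%N /\
  exists Zs : nat -> set X,
    (forall i, (0 < i < k)%N -> P (Zs i)) /\
    W = [set x | E x /\ (forall i, (0 < i < k)%N -> Zs i (iter i T x))
                 /\ E (iter k T x)] /\
    W !=set0.

Definition first_return (k : nat) (x : X) :=
  E x /\ (0 < k)%N /\ E (iter k T x) /\
  (forall l, (0 < l < k)%N -> ~ E (iter l T x)).

Definition Ytower (k l : nat) : set X := iter l T @` (first_return k).

Definition Yfamily : set (set X) :=
  [set Y | exists k l, (1 <= k)%N /\ (l < k)%N /\ Y = Ytower k l /\ Y !=set0].

Definition Pbar : set (set X) :=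
  [set Z | exists k W l, inV k W /\ (l < k)%N /\ Z = iter l T @` W].

Definition tower_closed (Q : set (set X)) :=
  forall Z k i, Q Z -> Z `<=` Ytower k 0 -> (1 <= i < k)%N ->
    Q (iter i T @` Z).
End Towers.

(* An element sum_i f_i t^i is represented by a finite list of pairs   *)
(* (i, f_i); two lists represent the same element iff they have the    *)
(* same coefficient function [coef].                                   *)
Section CrossedProduct.
Variables (X : Type) (K : fieldType) (T Tinv : X -> X) (conj : K -> K).

(* T^n for n : int, Tinv being the inverse of T *)
Definition Tz (n : int) : X -> X :=
  match n with Posz k => iter k T | Negz k => iter k.+1 Tinv end.

Definition cpelt := seq (int * (X -> K)).

Definition coef (a : cpelt) (n : int) (x : X) : K :=
  \sum_(p <- a | p.1 == n) p.2 x.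

Definition cp_one : cpelt := [:: (0%Z, fun _ => 1)].
Definition cp_add (a b : cpelt) : cpelt := a ++ b.
Definition cp_scale (c : K) (a : cpelt) : cpelt :=
  [seq (p.1, fun x => c * p.2 x) | p <- a].
(* (f t^i)(g t^j) = f (g o T^{-i}) t^{i+j} *)
Definition cp_mul (a b : cpelt) : cpelt :=
  [seq (p.1 + q.1, fun x => p.2 x * q.2 (Tz (- p.1) x)) | p <- a, q <- b].
(* (f t^i)^* = t^{-i} f^* = (f^* o T^i) t^{-i} *)
Definition cp_star (a : cpelt) : cpelt :=
  [seq (- p.1, fun x => conj (p.2 (Tz p.1 x))) | p <- a].

Definition chi (A : set X) : X -> K := fun x => if asbool (A x) then 1 else 0.

Inductive inB (P : set (set X)) : cpelt -> Prop :=
| inB_one : inB P cp_one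
| inB_gen Z : P Z -> inB P [:: (1%Z, chi Z)]
| inB_add a b : inB P a -> inB P b -> inB P (cp_add a b)
| inB_scale c a : inB P a -> inB P (cp_scale c a)
| inB_mul a b : inB P a -> inB P b -> inB P (cp_mul a b)
| inB_star a : inB P a -> inB P (cp_star a)
| inB_eq a b : inB P a -> coef a = coef b -> inB P b.
End CrossedProduct.

(* Main.v *)
Require Import Defs.
From HB Require Import structures.
From mathcomp Require Import all_boot all_order all_algebra.
From mathcomp Require Import all_classical all_reals all_analysis.
From mathcomp Require Import zify.
Import Order.TTheory GRing.Theory Num.Theory.
Local Open Scope classical_set_scope.
Local Open Scope ring_scope.
Set Implicit Arguments. Unset Strict Implicit. Unset Printing Implicit Defensive.
Section Comb2.
Local Open Scope nat_scope.
Variables (X : Type) (S S' : X -> X) (E : set X).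
Hypotheses (SK : cancel S S') (SK' : cancel S' S).

Definition A2 := [set x | forall m, 0 < m -> ~ E (iter m S x)].
Definition Bs (f : X -> X) := [set x | forall n, ~ E (iter n f x)].
Definition Nset := E `&` A2.

Lemma min_ex (Pn : nat -> Prop) n : Pn n -> exists2 m, Pn m & forall j, Pn j -> m <= j.
Proof.
move=> Pnn; have ex : exists n, `[< Pn n >] by exists n; exact/asboolP.
case: (ex_minnP ex) => m /asboolP Pm H; exists m => // j Pj; apply: H; exact/asboolP.
Qed.

Lemma iter_back k l x : k <= l -> iter k S (iter l S' x) = iter (l - k) S' x.
Proof.
move=> kl; rewrite -{1}(subnKC kl) iterD.
elim: k (l - k) x {kl} => [|k IH] d x //.
by rewrite iterSr iterS SK' IH.
Qed.

Lemma iter_fwd k l x : l <= k -> iter k S (iter l S' x) = iter (k - l) S x.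
Proof.
move=> lk; rewrite -{1}(subnK lk) iterD.
congr (iter _ S _).
elim: l x {lk} => [|l IH] x //.
by rewrite iterSr iterS SK' IH.
Qed.

Lemma A2_decomp x : A2 x -> ~ Bs S' x -> exists l, Nset (iter l S' x).
Proof.
move=> Ax nB.
have [l0 El0] : exists l, E (iter l S' x) by apply: contrapT => H; apply: nB => n En; apply: H; exists n.
have [l1 El1 min1] := @min_ex (fun l => E (iter l S' x)) _ El0.
exists l1; split => // m m0.
case: (leqP m l1) => ml.
  rewrite iter_back // => Em.
  have := min1 _ Em; rewrite leqNgt => /negP; apply.
  by rewrite ltn_subrL m0 /=; exact: leq_trans m0 ml.
rewrite iter_fwd; last exact: ltnW.
by apply: Ax; rewrite subn_gt0.
Qed.
End Comb2.
Section Comb.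
Local Open Scope nat_scope.
Variables (X : Type) (T Tinv : X -> X).
Hypotheses (TK : cancel T Tinv) (TinvK : cancel Tinv T).
Variables (E : set X) (P : set (set X)).
Hypothesis Pdisj : forall Z Z', P Z -> P Z' -> Z <> Z' -> Z `&` Z' = set0.
Hypothesis Psub : forall Z, P Z -> Z `<=` ~` E.
Hypothesis Pcov : forall x, ~ E x -> exists2 Z, P Z & Z x.

Lemma iterK n x : iter n Tinv (iter n T x) = x.
Proof. by elim: n x => [|n IH] x //; rewrite iterSr iterS TK IH. Qed.
Lemma iterKV n x : iter n T (iter n Tinv x) = x.
Proof. by elim: n x => [|n IH] x //; rewrite iterSr iterS TinvK IH. Qed.
Lemma iter_inj n : injective (iter n T).
Proof. by move=> x y H; rewrite -(iterK n x) H iterK. Qed.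

Lemma image_iter0 (A : set X) : iter 0 T @` A = A.
Proof. by apply/seteqP; split => [x [y Ay <-]|x Ax] //; exists x. Qed.

Lemma image_iter n (A : set X) : iter n T @` A = iter n Tinv @^-1` A.
Proof.
apply/seteqP; split => [x [y Ay <-]|x Ax] /=; first by rewrite iterK.
by exists (iter n Tinv x) => //; rewrite iterKV.
Qed.

Lemma image_iterD n m (A : set X) : iter n T @` (iter m T @` A) = iter (n + m) T @` A.
Proof.
apply/seteqP; split => [x [y [z Az <-] <-]|x [z Az <-]].
  by exists z => //; rewrite iterD.
by exists (iter m T z); [exists z|rewrite iterD].
Qed.

Lemma fr_uniq k k' y : first_return T E k y -> first_return T E k' y -> k = k'.
Proof.
move=> [Ey [k0 [Ek Hk]]] [_ [k0' [Ek' Hk']]].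
case: (ltngtP k k') => // H.
- by exfalso; apply: (Hk' k) => //; rewrite k0.
- by exfalso; apply: (Hk k') => //; rewrite k0'.
Qed.

Lemma Y_uniq k k' l l' y y' : first_return T E k y -> first_return T E k' y' ->
  (l < k)%N -> (l' < k')%N -> iter l T y = iter l' T y' ->
  [/\ l = l', k = k' & y = y'].
Proof.
wlog le_ll : k k' l l' y y' / (l <= l')%N.
  move=> Hw Fy Fy' lk lk' e.
  case: (leqP l l') => H; first exact: Hw.
  have [] := Hw k' k l' l y' y (ltnW H) Fy' Fy lk' lk (esym e).
  by move=> -> -> ->.
move=> Fy Fy' lk lk' e.
have e2 : iter l T y = iter l T (iter (l' - l) T y') by rewrite -iterD subnKC.
have {e2} e := @iter_inj l _ _ e2.
case: (posnP (l' - l)) => d0.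
  have ell : l = l' by apply/eqP; rewrite eqn_leq le_ll /= -subn_eq0 d0.
  move: e; rewrite d0 /= => ey; rewrite -ey in Fy' *; split => //; exact: fr_uniq Fy Fy'.
exfalso; case: Fy => Ey _; case: Fy' => _ [_ [_ H]].
apply: (H (l' - l)); last by rewrite -e.
by rewrite d0 /=; apply: leq_ltn_trans lk'; apply: leq_subr.
Qed.

Definition Wset (Zs : nat -> set X) k :=
  [set x | E x /\ (forall i, (0 < i < k)%N -> Zs i (iter i T x)) /\ E (iter k T x)].

Lemma inV_fr k W : inV T E P k W -> W `<=` first_return T E k.
Proof.
move=> [k1 [Zs [HZs [-> _]]]] x [Ex [Hx Ek]]; split => //; split => //; split => //.
by move=> l Hl; exact: (Psub (HZs l Hl) (Hx l Hl)).
Qed.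

Lemma inV_disj k W W' x : inV T E P k W -> inV T E P k W' -> W x -> W' x -> W = W'.
Proof.
move=> [_ [Zs [HZs [eW _]]]] [_ [Zs' [HZs' [eW' _]]]] Wx W'x.
have eZ : forall i, (0 < i < k)%N -> Zs i = Zs' i.
  move=> i Hi; move: Wx W'x; rewrite eW eW' => -[_ [Hx _]] [_ [Hx' _]].
  apply: contrapT => neq.
  have := Pdisj (HZs i Hi) (HZs' i Hi) neq.
  by rewrite -subset0 => /(_ (iter i T x)); apply; split; [apply: Hx|apply: Hx'].
rewrite eW eW'; apply/seteqP; split => y [Ey [H Ek]]; split => //; split => // i Hi.
  by rewrite -eZ //; apply: H.
by rewrite eZ //; apply: H.
Qed.

Lemma inV_cov k x : first_return T E k x -> exists W, inV T E P k W /\ W x.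
Proof.
move=> [Ex [k0 [Ek Hk]]].
have : forall i, exists Zi, (0 < i < k)%N -> P Zi /\ Zi (iter i T x).
  move=> i; case: (boolP (0 < i < k)%N) => Hi; last by exists set0.
  have [Z PZ Zx] := Pcov (Hk i Hi); by exists Z.
move=> /choice [Zs HZs].
exists (Wset Zs k); split; last by split => //; split => // i Hi; case: (HZs i Hi).
split => //; exists Zs; split; first by move=> i Hi; case: (HZs i Hi).
split => //; exists x; split => //; split => // i Hi; by case: (HZs i Hi).
Qed.

Lemma inV_cover k : \bigcup_(W in inV T E P k) W = Ytower T E k 0.
Proof.
rewrite /Ytower image_iter0; apply/seteqP; split.
  by move=> x [W HW Wx]; exact: inV_fr HW x Wx.
by move=> x Fx; have [W [HW Wx]] := inV_cov Fx; exists W.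
Qed.

Lemma Pbar_disj Z Z' : Pbar T E P Z -> Pbar T E P Z' -> Z <> Z' -> Z `&` Z' = set0.
Proof.
move=> [k [W [l [HW [lk ->]]]]] [k' [W' [l' [HW' [lk' ->]]]]] neq.
rewrite -subset0 => x [[y Wy ey] [y' Wy' ey']]; apply: neq.
have [el ek eyy] := Y_uniq (inV_fr HW Wy) (inV_fr HW' Wy') lk lk' (etrans ey (esym ey')).
subst l' k' y'; by rewrite (inV_disj HW HW' Wy Wy').
Qed.

Lemma Pbar_ne Z : Pbar T E P Z -> Z !=set0.
Proof. by move=> [k [W [l [[_ [Zs [_ [_ [y Wy]]]]] [lk ->]]]]]; exists (iter l T y), y. Qed.

Lemma Pbar_finer1 Z : Pbar T E P Z -> exists2 Z', (P `|` [set E]) Z' & Z `<=` Z'.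
Proof.
move=> [k [W [l [HW [lk ->]]]]].
case: HW => [k1 [Zs [HZs [eW _]]]].
case: (posnP l) => l0.
  exists E; first by right.
  by rewrite l0 image_iter0 eW => x [].
exists (Zs l); first by left; apply: HZs; rewrite l0.
by move=> x [y + <-]; rewrite eW => -[_ [H _]]; apply: H; rewrite l0.
Qed.

Lemma Pbar_finer2 Z : Pbar T E P Z -> exists2 Z', Yfamily T E Z' & Z `<=` Z'.
Proof.
move=> [k [W [l [HW [lk ->]]]]].
have HW' := HW; case: HW' => [k1 [Zs [HZs [eW [y Wy]]]]].
exists (Ytower T E k l).
  exists k, l; split => //; split => //; split => //.
  by exists (iter l T y), y => //; apply: inV_fr HW y Wy.
by move=> x [z Wz <-]; exists z => //; apply: inV_fr HW z Wz.
Qed.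

Lemma Pbar_tower : tower_closed T E (Pbar T E P).
Proof.
move=> Z k' i [k [W [l [HW [lk ->]]]]] sub Hi.
have HW' := HW; case: HW' => [k1 [Zs [HZs [eW [y Wy]]]]].
have : Ytower T E k' 0 (iter l T y) by apply: sub; exists y.
move=> [y' Fy' e].
have [el ek _] := Y_uniq (inV_fr HW Wy) Fy' lk (leq_ltn_trans (leq0n _) (proj2 (andP Hi))) (esym e).
subst l k'.
exists k, W, i; split => //; split; first by case/andP: Hi.
by rewrite image_iter0.
Qed.

Lemma Pbar_cover x l m : E (iter l Tinv x) -> 0 < m -> E (iter m T x) ->
  exists2 Z, Pbar T E P Z & Z x.
Proof.
move=> El m0 Em.
have [l0 El0 min0] := @min_ex (fun l => E (iter l Tinv x)) _ El.
set y := iter l0 Tinv x.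
have Ey : E (iter (m + l0) T y) by rewrite iterD /y iterKV.
have [k [k0 Ek] mink] := @min_ex (fun k => 0 < k /\ E (iter k T y)) (m + l0)
   (conj (leq_trans m0 (leq_addr _ _)) Ey).
have lk : l0 < k.
  rewrite ltnNge; apply/negP => kl.
  have := min0 (l0 - k); rewrite -(iter_back TinvK x kl) -/y => /(_ Ek).
  by rewrite leqNgt ltn_subrL k0 (leq_trans k0 kl).
have Fy : first_return T E k y.
  split => //; split => //; split => // j /andP[j0 jk] Ej.
  by have := mink j (conj j0 Ej); rewrite leqNgt jk.
have [W [HW Wy]] := inV_cov Fy.
exists (iter l0 T @` W); first by exists k, W, l0.
by exists y => //; rewrite /y iterKV.
Qed.

Section Coarse.
Variable Q : set (set X).
Hypothesis Qdisj : forall Z Z', Q Z -> Q Z' -> Z <> Z' -> Z `&` Z' = set0.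
Hypothesis Qf1 : forall Z, Q Z -> exists2 Z', (P `|` [set E]) Z' & Z `<=` Z'.
Hypothesis Qf2 : forall Z, Q Z -> exists2 Z', Yfamily T E Z' & Z `<=` Z'.
Hypothesis Qt : tower_closed T E Q.
Hypothesis Qmeet : forall l Z, Q Z -> (iter l T @^-1` Z) !=set0 ->
  exists2 Z', Q Z' & (Z' `&` iter l T @^-1` Z) !=set0.
Hypothesis Qne : forall Z, Q Z -> Z !=set0.

Lemma Q_eq Z Z' x : Q Z -> Q Z' -> Z x -> Z' x -> Z = Z'.
Proof.
move=> QZ QZ' Zx Z'x; apply: contrapT => neq.
by have := Qdisj QZ QZ' neq; rewrite -subset0 => /(_ x); apply.
Qed.

Lemma Q_coarse Z : Q Z -> exists2 Z', Pbar T E P Z' & Z `<=` Z'.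
Proof.
move=> QZ.
have [Y [k [l [k1 [lk [-> _]]]]] ZY] := Qf2 QZ.
have [z Zz] := Qne QZ.
have [y0 Fy0 ey0] := ZY z Zz.
have [Z' QZ' [x [Z'x Zx]]] : exists2 Z', Q Z' & (Z' `&` iter l T @^-1` Z) !=set0.
  by apply: Qmeet => //; exists y0; rewrite /= ey0.
have [y Fy ey] := ZY _ Zx.
have ex : x = y by apply: (@iter_inj l).
subst y.
have [Y' [k' [l' [k1' [lk' [eY' _]]]]] Z'Y'] := Qf2 QZ'.
have sZ' : Z' `<=` Ytower T E k 0.
  have := Z'Y' x Z'x; rewrite eY' => -[y' Fy' e].
  have [el ek _] := Y_uniq (l:=0) Fy Fy' (leq_ltn_trans (leq0n _) k1) lk' (esym e).
  by move: Z'Y'; rewrite eY' -el -ek.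
have FZ' : Z' `<=` first_return T E k.
  by move=> w /sZ'; rewrite /Ytower image_iter0.
have QlZ' : Q (iter l T @` Z').
  case: (posnP l) => l0; first by rewrite l0 image_iter0.
  by apply: (Qt QZ' sZ'); rewrite l0 lk.
have eZ : Z = iter l T @` Z' by apply: (Q_eq QZ QlZ' Zx); exists x.
have : forall i, exists Zi, (0 < i < k)%N -> P Zi /\ iter i T @` Z' `<=` Zi.
  move=> i; case: (boolP (0 < i < k)%N) => Hi; last by exists set0.
  have QiZ' : Q (iter i T @` Z') by apply: (Qt QZ' sZ').
  have [Zi [PZi|EZi] sub] := Qf1 QiZ'; first by exists Zi.
  exfalso; move: EZi => /= EZi; subst Zi.
  case: Fy => _ [_ [_ Hk]]; apply: (Hk i Hi).
  by apply: sub; exists x.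
move=> /choice [Zs HZs].
exists (iter l T @` Wset Zs k).
  exists k, (Wset Zs k), l; split => //; split => //.
  exists Zs; split; first by move=> i Hi; case: (HZs i Hi).
  split => //; exists x.
  have [Ez [_ [Ekz _]]] := FZ' x Z'x.
  split => //; split => // i Hi; by case: (HZs i Hi) => _; apply; exists x.
rewrite eZ => _ [w Z'w <-]; exists w => //.
have [Ew [_ [Ekw _]]] := FZ' w Z'w.
split => //; split => // i Hi; by case: (HZs i Hi) => _; apply; exists w.
Qed.
End Coarse.
End Comb.
Section Topo.
Variables (X : topologicalType).

Lemma clopen_iter_pre (S : X -> X) (Sc : continuous S) n (A : set X) :
  clopen A -> clopen (iter n S @^-1` A).
Proof.
elim: n A => [|n IH] A cA; first by [].
have : clopen (iter n S @^-1` (S @^-1` A)) by apply: IH; exact: preimage_clopen.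
by [].
Qed.

Lemma open_iter_pre (S : X -> X) (Sc : continuous S) n (A : set X) :
  open A -> open (iter n S @^-1` A).
Proof.
elim: n A => [|n IH] A cA; first by [].
have : open (iter n S @^-1` (S @^-1` A)) by apply: IH; move/continuousP: Sc; apply.
by [].
Qed.

Lemma closed_iter_pre (S : X -> X) (Sc : continuous S) n (A : set X) :
  closed A -> closed (iter n S @^-1` A).
Proof.
elim: n A => [|n IH] A cA; first by [].
have : closed (iter n S @^-1` (S @^-1` A)) by apply: IH; move/continuous_closedP: Sc; apply.
by [].
Qed.

Lemma clopen_prefix (S : X -> X) (Sc : continuous S) (Zs : nat -> set X) k :
  (forall i, (0 < i < k)%N -> clopen (Zs i)) ->
  clopen [set x | forall i, (0 < i < k)%N -> Zs i (iter i S x)].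
Proof.
elim: k => [|k IH] H.
  have -> : [set x | forall i, (0 < i < 0)%N -> Zs i (iter i S x)] = setT.
    by apply/seteqP; split => // x _ i; rewrite ltn0 andbF.
  exact: clopenT.
have -> : [set x | forall i, (0 < i < k.+1)%N -> Zs i (iter i S x)] =
   [set x | forall i, (0 < i < k)%N -> Zs i (iter i S x)] `&`
   [set x | (0 < k)%N -> Zs k (iter k S x)].
  apply/seteqP; split => x.
    move=> Hx; split => [i /andP[i0 ik]|k0]; apply: Hx; first by rewrite i0 ltnS ltnW.
    by rewrite k0 ltnSn.
  move=> [Hx Hk] i /andP[i0]; rewrite ltnS leq_eqVlt => /orP[/eqP ei|ik].
    by subst i; exact: Hk i0.
  by apply: Hx; rewrite i0.
have C2 : forall b : bool, (b -> (0 < k)%N) -> clopen [set x | b -> Zs k (iter k S x)].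
  case=> Hb.
    have -> : [set x | true -> Zs k (iter k S x)] = iter k S @^-1` Zs k.
      by apply/seteqP; split => x /=; [apply|move=> + _]. 
    by apply: clopen_iter_pre => //; apply: H; rewrite (Hb isT) ltnSn.
  have -> : [set x | false -> Zs k (iter k S x)] = setT by apply/seteqP.
  exact: clopenT.
have {C2} C2 := C2 (0 < k)%N id.
apply: clopenI C2; apply: IH => i /andP[i0 ik]; apply: H; by rewrite i0 ltnS ltnW.
Qed.

End Topo.
Section Meas.
Variables (R : realType) (X : ptopologicalType).
Variable mu : probability (g_sigma_algebraType (@open X)) R.
Local Notation mT := (g_sigma_algebraType (@open X)).

Lemma mopen (A : set X) : open A -> measurable (A : set mT).
Proof. move=> oA; exact: sub_sigma_algebra. Qed.

Lemma mclosed (A : set X) : closed A -> measurable (A : set mT).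
Proof. by move=> cA; rewrite -(setCK A); apply: measurableC; apply: mopen; rewrite openC. Qed.

Lemma disj_one (A B : set X) : measurable (A : set mT) -> measurable (B : set mT) ->
  A `&` B = set0 -> mu B = 1%E -> mu A = 0%E.
Proof.
move=> mA mB AB muB.
have := probability_le1 mu (measurableU _ _ mA mB).
have -> : mu (A `|` B) = (mu A + mu B)%E by rewrite measureU.
rewrite muB -{2}(add0e 1%E) leeD2rE // => H.
by apply/eqP; rewrite eq_le H measure_ge0.
Qed.

Lemma meet_full (A U : set X) : (0 < mu A)%E -> measurable (A : set mT) ->
  measurable (U : set mT) -> mu U = 1%E -> (A `&` U) !=set0.
Proof.
move=> pA mA mU muU; apply: contrapT => H.
have A0 : A `&` U = set0 by apply/seteqP; split => // x Hx; apply: H; exists x.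
by move: pA; rewrite (disj_one mA mU A0 muU) ltxx.
Qed.

Section Gen.
Variables (S S' : X -> X) (E : set X).
Hypotheses (Sc : continuous S) (S'c : continuous S') (SK : cancel S S') (SK' : cancel S' S).
Hypothesis (Ecl : clopen E).
Hypothesis HS : forall A, closed A -> mu (S @^-1` A) = mu A.
Hypothesis HS' : forall A, closed A -> mu (S' @^-1` A) = mu A.

Lemma A2_closed : closed (A2 S E).
Proof.
have -> : A2 S E = \bigcap_(m in [set m | (0 < m)%N]) (iter m S @^-1` ~` E).
  by apply/seteqP; split => x H m m0; exact: H.
apply: closed_bigI => m _; apply: closed_iter_pre => //; rewrite closedC; by case: Ecl.
Qed.

Lemma Bs_closed f : continuous f -> closed (Bs E f).
Proof.
move=> fc.
have -> : Bs E f = \bigcap_(m in [set: nat]) (iter m f @^-1` ~` E).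
  by apply/seteqP; split => x H m => [_|]; [exact: H|exact: H].
apply: closed_bigI => m _; apply: closed_iter_pre => //; rewrite closedC; by case: Ecl.
Qed.

Lemma N_closed : closed (Nset S E).
Proof. apply: closedI; [by case: Ecl|exact: A2_closed]. Qed.

Lemma N_null : mu (Nset S E) = 0%E.
Proof.
have e : S @^-1` A2 S E = A2 S E `|` S @^-1` Nset S E.
  apply/seteqP; split => x.
    move=> H; case: (pselect (E (S x))) => ESx.
      by right; split.
    left => m; case: m => [//|[|m]] _; first exact: ESx.
    by rewrite iterSr; apply: H.
  by move=> [H|[_ H]] m m0 /=; [rewrite -iterSr; apply: H|apply: H].
have d : A2 S E `&` S @^-1` Nset S E = set0.
  by apply/seteqP; split => // x [H [ESx _]]; exact: (H 1%N).
have mA2 := mclosed A2_closed.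
have mN : measurable (S @^-1` Nset S E : set mT).
  by apply: mclosed; move/continuous_closedP: Sc; apply; exact: N_closed.
have := HS A2_closed; rewrite e.
have -> : mu (A2 S E `|` S @^-1` Nset S E) = (mu (A2 S E) + mu (S @^-1` Nset S E))%E by rewrite measureU.
move=> eq.
have fA := fin_num_measure mu _ mA2.
have b0 : mu (S @^-1` Nset S E) = 0%E.
  by move: eq; rewrite addeC => /(congr1 (fun z => z - mu (A2 S E))%E); rewrite addeK // subee.
by rewrite -(HS N_closed).
Qed.

Lemma iter_inv l A : closed A -> mu (iter l S' @^-1` A) = mu A.
Proof.
elim: l A => [//|l IH] A cA.
have -> : iter l.+1 S' @^-1` A = iter l S' @^-1` (S' @^-1` A) by [].
rewrite IH ?HS' //; move/continuous_closedP: S'c; apply => //.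
Qed.

Lemma U_null : mu (\bigcup_l (iter l S' @^-1` Nset S E)) = 0%E.
Proof.
have mF : forall l, measurable (iter l S' @^-1` Nset S E : set mT).
  by move=> l; apply: mclosed; apply: closed_iter_pre => //; exact: N_closed.
apply/eqP; rewrite eq_le measure_ge0 andbT.
have := @measure_sigma_subadditive_tail _ _ _ mu _ (fun l => iter l S' @^-1` Nset S E) 0%N mF
  (bigcupT_measurable _ mF).
rewrite eseries0; first by apply => x [l _ Hl]; exists l.
by move=> i _ _; exact: (etrans (iter_inv i N_closed) N_null).
Qed.

Lemma A2_sub : A2 S E `<=` Bs E S' `|` \bigcup_l (iter l S' @^-1` Nset S E).
Proof.
move=> x Ax; case: (pselect (Bs E S' x)) => B; first by left.
right; have [l Hl] := A2_decomp SK' Ax B; by exists l.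
Qed.
End Gen.
End Meas.
Section Count.
Local Open Scope nat_scope.
Variables (X : Type) (T : X -> X) (E : set X) (P : set (set X)).
Hypothesis Pfin : finite_set P.

Definition pref n := [set A | exists Zs : nat -> set X, (forall i, 0 < i < n -> P (Zs i)) /\
  A = [set x | E x /\ forall i, 0 < i < n -> Zs i (iter i T x)]].

Lemma pref_fin n : finite_set (pref n).
Proof.
elim: n => [|n IH].
  apply: (sub_finite_set _ (finite_set1 E)) => A [Zs [_ ->]] /=.
  by apply/seteqP; split => [x []//|x Ex]; split => // i; rewrite ltn0 andbF.
have Fin2 : finite_set (P `|` [set setT]) by rewrite finite_setU; split => //; exact: finite_set1.
apply: (sub_finite_set _ (finite_image2 (fun A Z => A `&` (iter n T @^-1` Z)) IH Fin2)).
move=> A [Zs [HZs ->]] /=.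
exists [set x | E x /\ forall i, 0 < i < n -> Zs i (iter i T x)].
  exists Zs; split => // i /andP[i0 ilt]; apply: HZs; by rewrite i0 ltnS ltnW.
exists (if 0 < n then Zs n else setT).
  case: (posnP n) => n0; [by right|left; apply: HZs; by rewrite n0 ltnSn].
apply/seteqP; split => x.
  move=> [[Ex H] Hn]; split => // i /andP[i0]; rewrite ltnS leq_eqVlt => /orP[/eqP ei|ilt].
    by subst i; move: Hn; rewrite i0.
  by apply: H; rewrite i0.
move=> [Ex H]; split; first split => //.
  by move=> i /andP[i0 ilt]; apply: H; rewrite i0 ltnS ltnW.
case: (posnP n) => n0 //=; apply: H; by rewrite n0 ltnSn.
Qed.

Lemma inV_fin k : finite_set (inV T E P k).
Proof.
apply: (sub_finite_set _ (finite_image (fun A => A `&` (iter k T @^-1` E)) (pref_fin k))).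
move=> W [_ [Zs [HZs [-> _]]]] /=.
exists [set x | E x /\ forall i, 0 < i < k -> Zs i (iter i T x)]; first by exists Zs.
by apply/seteqP; split => x; [move=> [[Ex H] Ek]|move=> [Ex [H Ek]]].
Qed.

Lemma Pbar_countable : countable (Pbar T E P).
Proof.
apply: (sub_countable (subset_card_le _)
  (bigcup_countable (D := [set: nat]) (F := fun k => \bigcup_(l in [set: nat]) [set iter l T @` W | W in inV T E P k]) (countableP _) _)).
  by move=> Z [k [W [l [HW [lk ->]]]]]; exists k => //; exists l => //; exists W.
move=> k _; apply: bigcup_countable; first exact: countableP.
move=> l _; apply: finite_set_countable; apply: finite_image; exact: inV_fin.
Qed.
End Count.
Section InB.
Variables (X : Type) (K : fieldType) (T Tinv : X -> X).
Hypotheses (TK : cancel T Tinv) (TinvK : cancel Tinv T).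
Variable conj : {rmorphism K -> K}.
Variables (E : set X) (P : set (set X)).
Hypothesis Pdisj : forall Z Z', P Z -> P Z' -> Z <> Z' -> Z `&` Z' = set0.
Hypothesis Psub : forall Z, P Z -> Z `<=` ~` E.
Hypothesis Pcov : forall x, ~ E x -> exists2 Z, P Z & Z x.
Hypothesis Pfin : finite_set P.

Local Notation B := (inB T Tinv conj P).
Local Notation B0 f := (B [:: (0%Z, f)]).

Lemma coef1 n (f : X -> K) m x : coef [:: (n, f)] m x = if n == m then f x else 0.
Proof. by rewrite /coef big_cons big_nil /=; case: ifP => _; rewrite ?addr0. Qed.

Lemma B1_ext n (f g : X -> K) : B [:: (n, f)] -> f =1 g -> B [:: (n, g)].
Proof.
move=> Hf fg; refine (inB_eq Hf _); apply: funext => m; apply: funext => x.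
by rewrite !coef1 fg.
Qed.

Lemma B1_deg n m (f : X -> K) : n = m -> B [:: (n, f)] -> B [:: (m, f)].
Proof. by move=> ->. Qed.

Lemma B1_mul n m (f g : X -> K) : B [:: (n, f)] -> B [:: (m, g)] ->
  B [:: (n + m, fun x => f x * g (Tz T Tinv (- n) x))].
Proof. by move=> Hf Hg; exact: (inB_mul Hf Hg). Qed.

Lemma B1_star n (f : X -> K) : B [:: (n, f)] ->
  B [:: (- n, fun x => conj (f (Tz T Tinv n x)))].
Proof. by move=> Hf; exact: (inB_star Hf). Qed.

Lemma B0_one : B0 (fun=> 1).
Proof. exact: inB_one. Qed.

Lemma B0_scale c f : B0 f -> B0 (fun x => c * f x).
Proof. by move=> Hf; exact: (inB_scale c Hf). Qed.

Lemma B0_add f g : B0 f -> B0 g -> B0 (fun x => f x + g x).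
Proof.
move=> Hf Hg; refine (inB_eq (inB_add Hf Hg) _).
apply: funext => m; apply: funext => x.
by rewrite coef1 /coef /cp_add /= !big_cons big_nil /=; case: (0%Z == m); rewrite ?addr0.
Qed.

Lemma B0_mul f g : B0 f -> B0 g -> B0 (fun x => f x * g x).
Proof. by move=> Hf Hg; apply: (B1_ext (B1_mul Hf Hg)) => x. Qed.

Lemma conj_chi (A : set X) y : conj (chi K A y) = chi K A y.
Proof. by rewrite /chi; case: asboolP => _; rewrite ?rmorph1 ?rmorph0. Qed.

Lemma chi_idem (A : set X) y (a : K) : chi K A y * a * chi K A y = chi K A y * a.
Proof. by rewrite /chi; case: asboolP => _; rewrite ?mulr1 ?mulr0 ?mul0r. Qed.

Lemma chi_and (A B' C : set X) x y z : (C z <-> A x /\ B' y) ->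
  chi K C z = chi K A x * chi K B' y.
Proof.
move=> H; rewrite /chi; case: (pselect (C z)) => Cz.
  by have [Ax By] := proj1 H Cz; rewrite !asboolT ?mulr1.
rewrite (asboolF Cz); case: (pselect (A x)) => Ax; last by rewrite (asboolF Ax) mul0r.
case: (pselect (B' y)) => By; last by rewrite (asboolF By) mulr0.
by exfalso; apply: Cz; apply/H; split.
Qed.

Lemma chi_eq (A C : set X) x z : (C z <-> A x) -> chi K C z = chi K A x.
Proof.
move=> H; rewrite /chi; case: (pselect (C z)) => Cz; first by rewrite !asboolT //; apply/H.
by rewrite !asboolF // => Ax; apply: Cz; apply/H.
Qed.

Lemma B0_conjT Z f : P Z -> B0 f -> B0 (fun x => chi K Z (T x) * f (T x)).
Proof.
move=> PZ Hf.
have g := inB_gen T Tinv conj PZ.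
have m2 := B1_mul (B1_mul (B1_star g) Hf) g.
apply: (B1_ext (B1_deg _ m2)) => [//|x /=].
by rewrite !conj_chi chi_idem.
Qed.

Lemma B0_conjTinv Z f : P Z -> B0 f -> B0 (fun x => chi K Z x * f (Tinv x)).
Proof.
move=> PZ Hf.
have g := inB_gen T Tinv conj PZ.
have m2 := B1_mul (B1_mul g Hf) (B1_star g).
apply: (B1_ext (B1_deg _ m2)) => [//|x /=].
by rewrite conj_chi TinvK chi_idem.
Qed.

Lemma B0_chiP Z : P Z -> B0 (chi K Z).
Proof. by move=> PZ; apply: (B1_ext (B0_conjTinv PZ B0_one)) => x; rewrite mulr1. Qed.

Lemma B0_sum (s : seq (set X)) (F : set X -> X -> K) :
  (forall Z, Z \in s -> B0 (F Z)) -> B0 (fun x => \sum_(Z <- s) F Z x).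
Proof.
elim: s => [|a s IH] H.
  by apply: (B1_ext (B0_scale 0 B0_one)) => x; rewrite big_nil mul0r.
have H' : forall Z, Z \in s -> B0 (F Z) by move=> Z Zs; apply: H; rewrite in_cons Zs orbT.
apply: (B1_ext (B0_add (H a (mem_head _ _)) (IH H'))) => x.
by rewrite big_cons.
Qed.

Lemma Pseq : exists s : seq (set X), uniq s /\ forall Z, P Z <-> Z \in s.
Proof.
have [s Ps] := (iffLR (finite_seqP P)) Pfin.
exists (undup s); split; first exact: undup_uniq.
by move=> Z; rewrite mem_undup Ps.
Qed.

Lemma chi_sum (s : seq (set X)) : uniq s -> (forall Z, P Z <-> Z \in s) ->
  forall y, \sum_(Z <- s) chi K Z y = 1 - chi K E y.
Proof.
move=> us Hs y.
case: (pselect (E y)) => Ey.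
  rewrite big1_seq; last first.
    move=> Z /andP[_ Zs]; rewrite /chi; case: asboolP => // Zy.
    by exfalso; apply: (Psub (iffRL (Hs Z) Zs) Zy).
  by rewrite /chi; case: asboolP => // _; rewrite subrr.
have [Z0 PZ0 Z0y] := Pcov Ey.
rewrite (bigD1_seq Z0 (iffLR (Hs Z0) PZ0) us) /= big1_seq; last first.
  move=> Z /andP[ZZ0 Zs]; rewrite /chi; case: (pselect (Z y)) => Zy; last by rewrite asboolF.
  exfalso; have PZ := iffRL (Hs Z) Zs.
  have : Z <> Z0 by move=> e; move: ZZ0; rewrite e eqxx.
  move=> /(Pdisj PZ PZ0); rewrite -subset0 => /(_ y); apply; by split.
by rewrite /chi asboolT // asboolF // addr0 subr0.
Qed.

Lemma B0_chiE : B0 (chi K E).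
Proof.
have [s [us Hs]] := Pseq.
have := B0_add B0_one (B0_scale (-1) (B0_sum (F := chi K) (fun Z Zs => B0_chiP (iffRL (Hs Z) Zs)))).
move=> H; apply: (B1_ext H) => x.
by rewrite chi_sum // mulN1r opprB addrC subrK.
Qed.

Lemma B0_chiTE : B0 (fun x => chi K E (T x)).
Proof.
have [s [us Hs]] := Pseq.
have := B0_add B0_one (B0_scale (-1) (B0_sum (F := fun Z x => chi K Z (T x) * 1)
   (fun Z Zs => B0_conjT (iffRL (Hs Z) Zs) B0_one))).
move=> H; apply: (B1_ext H) => x.
under eq_bigr do rewrite mulr1.
by rewrite chi_sum // mulN1r opprB addrC subrK.
Qed.

Lemma iterTS n y : iter n T (T y) = iter n.+1 T y.
Proof. by rewrite iterSr. Qed.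

Lemma B0_W k W : inV T E P k W -> B0 (chi K W).
Proof.
move=> [k1 [Zs [HZs [eW _]]]].
pose Suf j := [set y | (forall i, (j <= i < k)%N -> Zs i (iter (i - j) T y)) /\ E (iter (k - j) T y)].
have HS : forall d, (d < k)%N -> B0 (fun x => chi K (Suf (k - d)%N) (T x)).
  elim => [|d IH] dk.
    apply: (B1_ext B0_chiTE) => x; apply: chi_eq; rewrite /Suf subn0 subnn /=.
    split => [Ex|[_ //]]; split => // i /andP[ki ik]; exfalso; lia.
  have j0 : (0 < k - d.+1 < k)%N by apply/andP; split; lia.
  have ekd : (k - d = (k - d.+1).+1)%N by lia.
  apply: (B1_ext (B0_conjT (HZs _ j0) (IH (ltnW dk)))) => x.
  symmetry; apply: chi_and; rewrite ekd /Suf /=; set j := (k - d.+1)%N.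
  have jk : (j < k)%N by lia.
  split.
    move=> [H Ek]; split; first by have := H j; rewrite subnn leqnn jk; apply.
    split.
      move=> i /andP[ji ik]; rewrite iterTS.
      have -> : ((i - j.+1).+1 = i - j)%N by lia.
      by apply: H; rewrite ik andbT; lia.
    by rewrite iterTS; have -> : ((k - j.+1).+1 = k - j)%N by lia.
  move=> [Zj [H Ek]]; split.
    move=> i /andP[ji ik]; case: (ltngtP i j) => ij; first by lia.
      have -> : (i - j = (i - j.+1).+1)%N by lia.
      by rewrite -iterTS; apply: H; rewrite ik andbT.
    by subst i; rewrite subnn.
  by move: Ek; rewrite iterTS; have -> : ((k - j.+1).+1 = k - j)%N by lia.
have H1 := HS (k.-1) ltac:(lia).
have ek : (k - k.-1 = 1)%N by lia.
rewrite ek in H1.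
apply: (B1_ext (B0_mul B0_chiE H1)) => x.
symmetry; apply: chi_and; rewrite eW /Suf /=.
split.
  move=> [Ex [H Ek]]; split => //; split.
    move=> i /andP[i1 ik]; rewrite iterTS.
    have -> : ((i - 1).+1 = i)%N by lia.
    by apply: H; rewrite ik andbT.
  by rewrite iterTS; have -> : ((k - 1).+1 = k)%N by lia.
move=> [Ex [H Ek]]; split => //; split.
  move=> i /andP[i0 ik]; have := H i; rewrite iterTS.
  have -> : ((i - 1).+1 = i)%N by lia.
  by apply; rewrite ik andbT.
by move: Ek; rewrite iterTS; have -> : ((k - 1).+1 = k)%N by lia.
Qed.

Lemma B0_Pbar Z : Pbar T E P Z -> B0 (chi K Z).
Proof.
move=> [k [W [l [HW [lk ->]]]]].
have HW' := HW; case: HW' => [k1 [Zs [HZs [eW _]]]].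
elim: l lk => [|l IH] lk; first by rewrite image_iter0; exact: B0_W HW.
have l0 : (0 < l.+1 < k)%N by rewrite lk.
apply: (B1_ext (B0_conjTinv (HZs _ l0) (IH (ltnW lk)))) => x.
symmetry; apply: chi_and; split.
  move=> [w Ww <-]; split.
    by move: Ww; rewrite eW => -[_ [H _]]; apply: H.
  by exists w => //; rewrite iterS TK.
move=> [Zx [w Ww ew]]; exists w => //; by rewrite iterS ew TinvK.
Qed.

End InB.
Theorem lemma3p9 (R : realType) (X : pseudoPMetricType R)
  (X_hausdorff : hausdorff_space X)
  (X_compact : compact [set: X])
  (X_totdisc : totally_disconnected [set: X])
  (X_infinite : infinite_set [set: X])
  (T Tinv : X -> X)
  (TK : cancel T Tinv) (TinvK : cancel Tinv T)
  (T_cont : continuous T) (Tinv_cont : continuous Tinv)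
  (mu : probability (g_sigma_algebraType (@open X)) R)
  (mu_full : forall U : set X, open U -> U !=set0 -> (0 < mu U)%E)
  (mu_inv : forall A : set X, (@open X).-sigma.-measurable A ->
     mu (T @^-1` A) = mu A)
  (mu_erg : forall A : set X, (@open X).-sigma.-measurable A ->
     T @^-1` A = A -> mu A = 0%E \/ mu A = 1%E)
  (K : fieldType) (conj : {rmorphism K -> K}) (conj_inv : involutive conj)
  (E : set X) (E_ne : E !=set0) (E_clopen : clopen E)
  (P : set (set X)) (P_part : is_partition P (~` E)) :
  (* (1) *)
  ((forall k, (1 <= k)%N -> is_partition (inV T E P k) (Ytower T E k 0)) /\
   quasi_partition (mu : set X -> \bar R) (Pbar T E P)) /\
  (* (2) *)
  (finer (Pbar T E P) (P `|` [set E]) /\ finer (Pbar T E P) (Yfamily T E)) /\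
  (* (3) *)
  tower_closed T E (Pbar T E P) /\
  (* coarsest quasi-partition with (2) and (3) *)
  (forall Q : set (set X), quasi_partition (mu : set X -> \bar R) Q ->
     finer Q (P `|` [set E]) -> finer Q (Yfamily T E) ->
     tower_closed T E Q -> finer Q (Pbar T E P)) /\
  (* chi_Zbar in B *)
  (forall Zb, Pbar T E P Zb ->
     inB T Tinv conj P [:: (0%Z, chi K Zb)]).
Proof.
case: P_part => Pfin [[Pclop Pdisj] Pcup].
have Psub : forall Z, P Z -> Z `<=` ~` E.
  by move=> Z PZ x Zx; rewrite -Pcup; exists Z.
have Pcov : forall x, ~ E x -> exists2 Z, P Z & Z x.
  by move=> x nEx; have : (~` E) x by []; rewrite -Pcup => -[Z PZ Zx]; exists Z.
have Wclop : forall k W, inV T E P k W -> clopen W.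
  move=> k W [_ [Zs [HZs [eW _]]]].
  have C : clopen (E `&` ([set x | forall i, (0 < i < k)%N -> Zs i (iter i T x)] `&`
      (iter k T @^-1` E))).
    apply: clopenI => //; apply: clopenI; last exact: clopen_iter_pre.
    by apply: clopen_prefix => // i Hi; case: (Pclop _ (HZs i Hi)).
  by rewrite eW.
have Pbclop : forall Z, Pbar T E P Z -> clopen Z.
  move=> Z [k [W [l [HW [lk ->]]]]]; rewrite (image_iter TK TinvK).
  by apply: clopen_iter_pre => //; exact: Wclop HW.
have Pbdisj := Pbar_disj TK Pdisj Psub.
have Pbne : forall Z, Pbar T E P Z -> Z !=set0 by move=> Z; exact: Pbar_ne.
have HT : forall A, closed A -> mu (T @^-1` A) = mu A.
  by move=> A cA; apply: mu_inv; exact: mclosed.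
have HTinv : forall A, closed A -> mu (Tinv @^-1` A) = mu A.
  move=> A cA.
  have e : T @^-1` (Tinv @^-1` A) = A by apply/seteqP; split => x /=; rewrite TK.
  rewrite -[in RHS]e mu_inv //; apply: mclosed.
  by move/continuous_closedP: Tinv_cont; apply.
have Eo : open E by case: E_clopen.
have muE : (0 < mu E)%E by apply: mu_full.
set U := \bigcup_(Z in Pbar T E P) Z.
have Uo : open U by apply: bigcup_open => Z /Pbclop [].
have muU : mu U = 1%E.
  have I_cl : closed (Bs E T `&` Bs E Tinv).
    exact: closedI (Bs_closed E_clopen T_cont) (Bs_closed E_clopen Tinv_cont).
  have I_inv : T @^-1` (Bs E T `&` Bs E Tinv) = Bs E T `&` Bs E Tinv.
    apply/seteqP; split => x /= [H1 H2]; split.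
    - case=> [|n]; first by have := H2 1%N; rewrite /= TK.
      by rewrite iterSr; exact: H1 n.
    - by move=> n; have := H2 n.+1; rewrite iterSr TK.
    - by move=> n; have := H1 n.+1; rewrite iterSr.
    - case=> [|n]; first by exact: H1 1%N.
      by rewrite iterSr TK; exact: H2 n.
  have muI : mu (Bs E T `&` Bs E Tinv) = 0%E.
    case: (mu_erg _ (mclosed I_cl) I_inv) => // H.
    have : mu E = 0%E.
      apply: (disj_one (mopen Eo) (mclosed I_cl) _ H).
      by apply/seteqP; split => // x [Ex [H1 _]]; exact: H1 0%N Ex.
    by move=> e; move: muE; rewrite e ltxx.
  have N1 := U_null T_cont Tinv_cont E_clopen HT HTinv.
  have N2 := U_null Tinv_cont T_cont E_clopen HTinv HT.
  set U1 := \bigcup_l iter l Tinv @^-1` Nset T E in N1.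
  set U2 := \bigcup_l iter l T @^-1` Nset Tinv E in N2.
  have mU1 : measurable (U1 : set (g_sigma_algebraType (@open X))).
    by apply: bigcupT_measurable => l; apply: mclosed; apply: closed_iter_pre => //; exact: N_closed.
  have mU2 : measurable (U2 : set (g_sigma_algebraType (@open X))).
    by apply: bigcupT_measurable => l; apply: mclosed; apply: closed_iter_pre => //; exact: N_closed.
  have cov : ~` U `<=` (Bs E T `&` Bs E Tinv) `|` (U1 `|` U2).
    move=> x nUx.
    case: (pselect (Bs E Tinv x)) => BTi.
      case: (pselect (Bs E T x)) => BT; first by left.
      have A2x : A2 Tinv E x by move=> m _; exact: BTi m.
      by case: (A2_sub TK A2x) => // H; right; right.
    have [l El] : exists l, E (iter l Tinv x).
      by apply: contrapT => H; apply: BTi => n En; apply: H; exists n.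
    case: (pselect (A2 T E x)) => A2x.
      by case: (A2_sub TinvK A2x) => // H; right; left.
    have [m [m0 Em]] : exists m, (0 < m)%N /\ E (iter m T x).
      by apply: contrapT => H; apply: A2x => m m0 Em; apply: H; exists m.
    exfalso; apply: nUx; have [Z PZ Zx] := Pbar_cover TinvK Pcov El m0 Em; by exists Z.
  have mU := mopen Uo.
  have mCU : measurable (~` U : set (g_sigma_algebraType (@open X))) := measurableC mU.
  have mI := mclosed I_cl.
  have mU12 := measurableU _ _ mU1 mU2.
  have mIU := measurableU _ _ mI mU12.
  have le1 : (mu (~` U) <= mu ((Bs E T `&` Bs E Tinv) `|` (U1 `|` U2)))%E.
    by apply: le_measure => //; rewrite inE.
  have le2 : (mu ((Bs E T `&` Bs E Tinv) `|` (U1 `|` U2)) <=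
     mu (Bs E T `&` Bs E Tinv) + mu (U1 `|` U2))%E := measureU2 mu mI mU12.
  have le3 : (mu (U1 `|` U2) <= mu U1 + mu U2)%E := measureU2 mu mU1 mU2.
  have CU0 : mu (~` U) = 0%E.
    apply/eqP; rewrite eq_le measure_ge0 andbT.
    apply: (le_trans le1); apply: (le_trans le2).
    rewrite muI add0e; apply: (le_trans le3).
    by rewrite N1 N2 adde0.
  have dj : ~` U `&` U = set0 by apply/seteqP; split => // x [].
  have : mu (~` U `|` U) = (mu (~` U) + mu U)%E := measureU mu mCU mU dj.
  by rewrite setvU probability_setT CU0 add0e.
split; [split|split; [split|split; [|split]]].
- move=> k k1; split; first exact: inV_fin Pfin k.
  split; last exact: inV_cover Psub Pcov k.
  split.
    move=> W HW; split; last exact: Wclop HW.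
    by case: HW => _ [Zs [_ [_ ne]]].
  move=> W W' HW HW' neq; apply/seteqP; split => // x [Wx W'x].
  exact: neq (inV_disj Pdisj HW HW' Wx W'x).
- split; first exact: Pbar_countable.
  split; last exact: muU.
  split; last exact: Pbdisj.
  by move=> Z HZ; split; [exact: Pbne|exact: Pbclop].
- by move=> Z HZ; exact: Pbar_finer1 HZ.
- by move=> Z HZ; exact: Pbar_finer2 HZ.
- by move=> Z k i HZ sub Hi; have := Pbar_tower TK Psub HZ sub Hi.
- move=> Q [Qc [[Qcl Qdisj] muQ]] Qf1 Qf2 Qt Z QZ.
  apply: (Q_coarse TK Qdisj Qf1 Qf2 Qt _ _ QZ) => [l Z0 QZ0 ne|Z0 QZ0]; last by case: (Qcl _ QZ0).
  have Vo : open (\bigcup_(Z in Q) Z) by apply: bigcup_open => Z1 /Qcl [_ []].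
  have oZ0 : open (iter l T @^-1` Z0).
    by apply: open_iter_pre => //; case: (Qcl _ QZ0) => _ [].
  have [x [Zx [Z' QZ' Z'x]]] := meet_full (mu_full _ oZ0 ne) (mopen oZ0) (mopen Vo) muQ.
  by exists Z' => //; exists x.
- move=> Zb HZb; exact: (B0_Pbar TK TinvK conj Pdisj Psub Pcov Pfin HZb).
Qed.
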